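(* Let $G=(V,E)$ be a graph with $n=|V|$ vertices and maximum degree at most $B$, and let $k\le n$ be a nonnegative integer. Construct the graph $G'=(V',E')$ as follows. For each $v\in V$ add a copy of the complete bipartite graph $K_{B+1,B+2}$ (the choice gadget of $v$, with smaller side $S_v$ of $B+1$ vertices and larger side $L_v$ of $B+2$ vertices); add a vertex $v_d$ together with $B-d(v)+1$ new pendant vertices (leaves) adjacent only to $v_d$, where $d(v)$ is the degree of $v$ in $G$; and for each $u\in N[v]$ (closed neighbourhood of $v$ in $G$) add an edge from a vertex of $L_v$ to $u_d$, using distinct vertices of $L_v$ for distinct $u\in N[v]$. Define capacities $c(v_d)=B+1$ for all $v\in V$ and $c(w)=\deg_{G'}(w)$ for all other vertices $w$ of $G'$. Then $G'$ has maximum degree $B+2$, $|E'|=n(B+2)^2$, and $G$ has a dominating set of size at most $k$ if and only if $G'$ has a capacitated vertex cover (with respect to $c$) of size at most $|E'|/(B+2)+k=n(B+2)+k$.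
   Context: A dominating set of $G$ is a set $S\subseteq V$ such that every vertex of $G$ is in $S$ or adjacent to a vertex of $S$. Given a graph with vertex capacities $c:V\to\mathbb{Z}_{\ge 0}$, a capacitated vertex cover is a set $C$ of vertices together with an assignment of every edge to one of its endpoints lying in $C$ such that each $w\in C$ is assigned at most $c(w)$ edges. *)

(* Defs.v *)
From mathcomp Require Import all_boot.
Set Implicit Arguments. Unset Strict Implicit. Unset Printing Implicit Defensive.

Section Graphs.
Variable T : finType.
Implicit Types (e : rel T).

(* A (simple) graph on T is a symmetric irreflexive relation e. *)
Definition deg e (v : T) : nat := #|[set u | e v u]|.
Definition closedN e (v : T) : {set T} := v |: [set u | e v u].

Definition num_edges e : nat :=
  #|[set [set p.1; p.2] | p in [set p : T * T | e p.1 p.2]]|.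

Definition dominating e (D : {set T}) : Prop :=
  forall v, v \in D \/ exists2 u, u \in D & e v u.

(* Capacitated vertex cover: a set C with an assignment a of every edge
   {x,y} (a x y = a y x) to one of its endpoints lying in C, such that
   each w in C is assigned at most c w edges. *)
Definition cap_vc e (c : T -> nat) (C : {set T}) (a : T -> T -> T) : Prop :=
  (forall x y, e x y ->
     [/\ a x y = a y x, (a x y == x) || (a x y == y) & a x y \in C]) /\
  (forall w, w \in C -> #|[set y | e w y & a w y == w]| <= c w).
End Graphs.

Section Construction.
Variables (V : finType) (e : rel V) (B : nat).

(* leaves of v_d: indices l < B - d(v) + 1 *)
Definition leafT := {p : V * 'I_(B+1) | p.2 < B - deg e p.1 + 1}.

(* vertices of G':  S_v (B+1 vertices), L_v (B+2 vertices), v_d, leaves *)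
Definition Vtx : finType :=
  ((V * 'I_(B+1)) + (V * 'I_(B+2)) + (V + leafT))%type.

Definition Svtx v (i : 'I_(B+1)) : Vtx := inl (inl (v, i)).
Definition Lvtx v (j : 'I_(B+2)) : Vtx := inl (inr (v, j)).
Definition Dvtx v : Vtx := inr (inl v).

(* f v u : the vertex of L_v joined to u_d, for u in N[v]. *)
Variable f : V -> V -> 'I_(B+2).

Definition half_adj (x y : Vtx) : bool :=
  match x, y with
  | inl (inl (v, _)), inl (inr (u, _)) => v == u
  | inl (inr (v, j)), inr (inl u) => (u \in closedN e v) && (f v u == j)
  | inr (inr l), inr (inl u) => (sval l).1 == u
  | _, _ => false
  end.

Definition gadj : rel Vtx := fun x y => half_adj x y || half_adj y x.

Definition cap (w : Vtx) : nat :=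
  match w with
  | inr (inl _) => B + 1
  | _ => deg gadj w
  end.
End Construction.
Arguments gadj {V} e {B} f.
Arguments cap {V} e {B} f w.

(* Main.v *)
Require Import Defs.
From mathcomp Require Import all_boot.
Set Implicit Arguments. Unset Strict Implicit. Unset Printing Implicit Defensive.

Section Pf.
Variables (V : finType) (e : rel V) (B : nat) (f : V -> V -> 'I_(B+2)).
Hypotheses (e_sym : symmetric e) (e_irr : irreflexive e)
    (degB : forall v, deg e v <= B)
    (f_inj : forall v, {in closedN e v &, injective (f v)}).

Notation VT := (Vtx e B).
Notation half := (@half_adj V e B f).
Definition Lf (l : leafT e B) : VT := inr (inr l).

Lemma half_irr x : half x x = false.
Proof. by case: x => [[[v i]|[v j]]|[u|l]]. Qed.

Lemma half_asym x y : half x y -> half y x = false.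
Proof. by case: x => [[[v i]|[v j]]|[u|l]]; case: y => [[[w i']|[w j']]|[u'|l']]. Qed.

Lemma inN u v : (u \in closedN e v) = (u == v) || e v u.
Proof. by rewrite /closedN !inE. Qed.

Lemma closedN_sym u v : (u \in closedN e v) = (v \in closedN e u).
Proof. by rewrite !inN eq_sym e_sym. Qed.

Lemma card_closedN v : #|closedN e v| = (deg e v).+1.
Proof. by rewrite /closedN cardsU1 inE e_irr. Qed.

Definition leaves u := [set l : leafT e B | (val l).1 == u].

Lemma leB u : B - deg e u + 1 <= B + 1.
Proof. by rewrite leq_add2r leq_subr. Qed.

Definition mkleaf u (i : 'I_(B - deg e u + 1)) : leafT e B :=
  exist _ (u, widen_ord (leB u) i) (ltn_ord i).

Lemma card_leaves u : #|leaves u| = B - deg e u + 1.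
Proof.
have -> : leaves u = @mkleaf u @: setT.
  apply/setP => l; rewrite !inE; apply/idP/imsetP.
    case: l => [[w i] /= hi] /eqP Hw; subst w.
    exists (Ordinal hi) => //; apply: val_inj => /=; congr pair; exact: val_inj.
  by case=> i _ ->.
rewrite card_imset ?cardsT ?card_ord //.
move=> i j /(congr1 (fun l : leafT e B => nat_of_ord (val l).2)) /= h; exact: val_inj.
Qed.

Lemma cardsum (T : finType) (P : pred T) : #|[set y | P y]| = \sum_y (P y : nat).
Proof.
rewrite -sum1_card big_mkcond /=; apply: eq_bigr => y _; rewrite inE; by case: (P y).
Qed.

Definition D' u : VT := inr (inl u).
Definition outs (w : VT) := [set y | half w y].
Definition ins (w : VT) := [set y | half y w].

Lemma degE w : deg (gadj e f) w = #|outs w :|: ins w|.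
Proof. by rewrite /deg; apply: eq_card => y; rewrite !inE. Qed.

Lemma deg_le w : deg (gadj e f) w <= #|outs w| + #|ins w|.
Proof. by rewrite degE cardsU leq_subr. Qed.

Lemma outS v i : outs (Svtx e v i) = Lvtx e v @: setT.
Proof.
apply/setP => y; rewrite /outs !inE; case: y => [[[w i']|[w j']]|[u'|l']] /=.
- by apply/esym/imsetP => -[? _].
- apply/eqP/imsetP => [<-|[j _ [->]]] //; by exists j'.
- by apply/esym/imsetP => -[? _].
- by apply/esym/imsetP => -[? _].
Qed.

Lemma card_outS v i : #|outs (Svtx e v i)| = B + 2.
Proof. by rewrite outS card_imset ?cardsT ?card_ord // => j j' [->]. Qed.

Lemma insS v i : ins (Svtx e v i) = set0.
Proof. by apply/setP => y; rewrite /ins !inE; case: y => [[[w i']|[w j']]|[u'|l']]. Qed.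

Lemma outL v j : outs (Lvtx e v j) = D' @: [set u in closedN e v | f v u == j].
Proof.
apply/setP => y; rewrite /outs !inE; case: y => [[[w i']|[w j']]|[u'|l']] /=.
- by apply/esym/imsetP => -[? _].
- by apply/esym/imsetP => -[? _].
- apply/idP/imsetP => [h|[u]]; first by exists u'; rewrite // inE.
  by rewrite inE => h [->].
- by apply/esym/imsetP => -[? _].
Qed.

Lemma card_outL v j : #|outs (Lvtx e v j)| <= 1.
Proof.
rewrite outL; apply/card_le1_eqP => y1 y2 /imsetP[u1 + ->] /imsetP[u2 + ->].
rewrite !inE -!inN => /andP[h1 /eqP e1] /andP[h2 /eqP e2].
by rewrite (f_inj h1 h2) // e1 e2.
Qed.

Lemma insL v j : ins (Lvtx e v j) = Svtx e v @: setT.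
Proof.
apply/setP => y; rewrite /ins !inE; case: y => [[[w i']|[w j']]|[u'|l']] /=.
- apply/eqP/imsetP => [<-|[i _ [->]]] //; by exists i'.
- by apply/esym/imsetP => -[? _].
- by apply/esym/imsetP => -[? _].
- by apply/esym/imsetP => -[? _].
Qed.

Lemma card_insL v j : #|ins (Lvtx e v j)| = B + 1.
Proof. by rewrite insL card_imset ?cardsT ?card_ord // => j1 j2 [->]. Qed.

Lemma outD u : outs (D' u) = set0.
Proof. by apply/setP => y; rewrite /outs !inE; case: y => [[[w i']|[w j']]|[u'|l']]. Qed.

Lemma insD u : ins (D' u) =
  (fun w => Lvtx e w (f w u)) @: closedN e u :|: Lf @: leaves u.
Proof.
apply/setP => y; rewrite /ins !inE; case: y => [[[w i']|[w j']]|[u'|l']] /=.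
- by apply/esym/norP; split; apply/imsetP => -[? _].
- apply/idP/orP => [/andP[h /eqP <-]|[/imsetP[w' hw [-> ->]]|/imsetP[? _] //]].
    by left; apply/imsetP; exists w; rewrite // closedN_sym.
  by rewrite -closedN_sym hw eqxx.
- by apply/esym/norP; split; apply/imsetP => -[? _].
- apply/idP/orP => [h|[/imsetP[? _] //|/imsetP[l h [->]]]].
    by right; apply/imsetP; exists l'; rewrite // inE.
  by move: h; rewrite inE.
Qed.

Lemma card_insD u : #|ins (D' u)| = B + 2.
Proof.
rewrite insD cardsU.
have -> : (fun w => Lvtx e w (f w u)) @: closedN e u :&: Lf @: leaves u = set0.
  by apply/setP => y; rewrite !inE; apply/andP => -[/imsetP[? _ ->] /imsetP[? _]].
rewrite cards0 subn0 card_imset; last by move=> w1 w2 [].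
rewrite card_imset; last by move=> l1 l2 [].
by rewrite card_closedN card_leaves addSn addnA subnKC ?degB // addn1 addn2.
Qed.

Lemma outLeaf l : outs (Lf l) = [set D' (val l).1].
Proof.
apply/setP => y; rewrite /outs !inE; case: y => [[[w i']|[w j']]|[u'|l']] //=.
by rewrite eq_sym; apply/eqP/eqP => [->|[]].
Qed.

Lemma insLeaf l : ins (Lf l) = set0.
Proof. by apply/setP => y; rewrite /ins !inE; case: y => [[[w i']|[w j']]|[u'|l']]. Qed.

Lemma deg_bound w : deg (gadj e f) w <= B + 2.
Proof.
apply: leq_trans (deg_le w) _.
case: w => [[[v i]|[v j]]|[u|l]].
- by rewrite (card_outS v i) insS cards0 addn0.
- rewrite (card_insL v j) addnC -addnA leq_add2l.
  by apply: leq_trans (card_outL v j) _.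
- by rewrite (outD u) cards0 (card_insD u).
- by rewrite (outLeaf l) insLeaf cards1 cards0 addn0 addn2.
Qed.

Lemma degD u : deg (gadj e f) (D' u) = B + 2.
Proof. by rewrite degE outD set0U card_insD. Qed.

Lemma degS v i : deg (gadj e f) (Svtx e v i) = B + 2.
Proof. by rewrite degE insS setU0 card_outS. Qed.


Lemma edges_half : num_edges (gadj e f) = #|[set p : VT * VT | half p.1 p.2]|.
Proof.
rewrite /num_edges.
have -> : [set [set p.1; p.2] | p in [set p : VT * VT | gadj e f p.1 p.2]] =
          [set [set p.1; p.2] | p in [set p : VT * VT | half p.1 p.2]].
  apply/setP => z; apply/imsetP/imsetP => -[[x y]]; rewrite inE /= => h ->.
  - case/orP: h => h; first by exists (x, y); rewrite ?inE.
    by exists (y, x); rewrite ?inE // setUC.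
  - by exists (x, y); rewrite // inE /gadj /= h.
apply: card_in_imset => -[x1 y1] [x2 y2]; rewrite !inE /= => h1 h2 E.
have hx1 : x1 \in [set x2; y2] by rewrite -E !inE eqxx.
have hy1 : y1 \in [set x2; y2] by rewrite -E !inE eqxx orbT.
move: hx1 hy1; rewrite !inE => /orP[] /eqP ex /orP[] /eqP ey; subst.
- by rewrite half_irr in h1.
- by [].
- by rewrite (half_asym h1) in h2.
- by rewrite half_irr in h1.
Qed.

Lemma card_pairs (T : finType) (P : T -> T -> bool) :
  #|[set p : T * T | P p.1 p.2]| = \sum_x #|[set y | P x y]|.
Proof.
rewrite (cardsum (fun p : T * T => P p.1 p.2)).
rewrite -(pair_bigA _ (fun x y => (P x y : nat))).
by apply: eq_bigr => x _; rewrite cardsum.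
Qed.

Lemma sumL v : \sum_(j < B + 2) #|outs (Lvtx e v j)| = (deg e v).+1.
Proof.
rewrite -card_closedN -sum1_card (partition_big (f v) predT) //=.
apply: eq_bigr => j _.
rewrite outL card_imset; last by move=> u1 u2 [].
rewrite sum1dep_card; apply: eq_card => u; rewrite !inE.
done.
Qed.

Lemma sumLeaf : \sum_(l : leafT e B) 1 = \sum_v (B - deg e v + 1).
Proof.
rewrite (partition_big (fun l : leafT e B => (val l).1) predT) //=.
apply: eq_bigr => v _; rewrite sum1dep_card -card_leaves.
by apply: eq_card => l; rewrite !inE.
Qed.

Lemma num_edgesE : num_edges (gadj e f) = #|V| * (B + 2) ^ 2.
Proof.
rewrite edges_half card_pairs.
rewrite big_sumType /= !big_sumType /=.
have -> : \sum_(i : V * 'I_(B+1)) #|[set y | half (inl (inl i)) y]| =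
          \sum_(i : V * 'I_(B+1)) (B + 2).
  by apply: eq_bigr => -[v i] _; exact: card_outS.
have -> : \sum_(i : V * 'I_(B+2)) #|[set y | half (inl (inr i)) y]| =
          \sum_v (deg e v).+1.
  transitivity (\sum_(i : V * 'I_(B+2)) #|outs (Lvtx e i.1 i.2)|).
    by apply: eq_bigr => -[v j].
  rewrite -(pair_bigA _ (fun v j => #|outs (Lvtx e v j)|)).
  by apply: eq_bigr => v _; exact: sumL.
have -> : \sum_(i : V) #|[set y | half (inr (inl i)) y]| = 0.
  by apply: big1 => u _; move: (outD u); rewrite /outs => ->; rewrite cards0.
have -> : \sum_(i : leafT e B) #|[set y | half (inr (inr i)) y]| =
          \sum_(l : leafT e B) 1.
  by apply: eq_bigr => l _; move: (outLeaf l); rewrite /outs => ->; rewrite cards1.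
rewrite sumLeaf add0n -addnA -big_split /=.
have -> : \sum_v ((deg e v).+1 + (B - deg e v + 1)) = \sum_(v : V) (B + 2).
  apply: eq_bigr => v _.
  by rewrite addSn addnA subnKC ?degB // addn1 addn2.
rewrite !sum_nat_const card_prod !card_ord.
rewrite -mulnA -mulnDr -[X in _ * (_ + X)]mul1n -mulnDl addn1.
by rewrite -[(B+1).+1]addn1 -addnA expnS expn1.
Qed.


Definition owner (x : VT) : V :=
  match x with
  | inl (inl (v, _)) => v
  | inl (inr (v, _)) => v
  | inr (inl u) => u
  | inr (inr l) => (val l).1
  end.

Lemma card_owner (C : {set VT}) :
  #|C| = \sum_v #|[set x in C | owner x == v]|.
Proof.
rewrite -sum1_card (partition_big owner predT) //=.
by apply: eq_bigr => v _; rewrite sum1dep_card; apply: eq_card => x; rewrite !inE.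
Qed.

Lemma sum_mem (D : {set V}) : \sum_v (v \in D : nat) = #|D|.
Proof. by rewrite -sum1_card [RHS]big_mkcond /=; apply: eq_bigr => v _; case: (v \in D). Qed.

Lemma ltB2 m : m < B + 2 -> m <= B + 1.
Proof. by rewrite addn2 addn1 ltnS. Qed.

Section Forward.
Variable D : {set V}.
Hypothesis domD : dominating e D.

Definition inC (x : VT) : bool :=
  match x with
  | inl (inl (v, _)) => v \notin D
  | inl (inr (v, _)) => v \in D
  | inr (inl _) => true
  | inr (inr _) => false
  end.

Definition Cf := [set x | inC x].

Definition asg (x y : VT) : VT :=
  match x, y with
  | inl (inl (v, _)), inl (inr _) => if v \in D then y else x
  | inl (inr (v, _)), inl (inl _) => if v \in D then x else y
  | inl (inr (v, _)), inr (inl _) => if v \in D then x else y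
  | inr (inl _), inl (inr (v, _)) => if v \in D then y else x
  | inr (inr _), inr (inl _) => y
  | inr (inl _), inr (inr _) => x
  | _, _ => x
  end.

Lemma asg_ok x y : gadj e f x y ->
  [/\ asg x y = asg y x, (asg x y == x) || (asg x y == y) & asg x y \in Cf].
Proof.
rewrite /gadj.
case: x => [[[v i]|[v j]]|[u|l]]; case: y => [[[w i']|[w j']]|[u'|l']] //=;
  rewrite ?orbF //=.
- by move=> /eqP <-; rewrite !inE; case: ifP => hD; split; rewrite //= ?hD ?eqxx ?orbT.
- by move=> /eqP <-; rewrite !inE; case: ifP => hD; split; rewrite //= ?hD ?eqxx ?orbT.
- by move=> _; rewrite !inE; case: ifP => hD; split; rewrite //= ?hD ?eqxx ?orbT.
- by move=> _; rewrite !inE; case: ifP => hD; split; rewrite //= ?hD ?eqxx ?orbT.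
- by move=> _; rewrite !inE; split; rewrite //= ?eqxx ?orbT.
- by move=> _; rewrite !inE; split; rewrite //= ?eqxx ?orbT.
Qed.

Lemma cap_ok w : w \in Cf ->
  #|[set y | gadj e f w y & asg w y == w]| <= cap e f w.
Proof.
case: w => [[[v i]|[v j]]|[u|l]] hw.
- by apply: subset_leq_card; apply/subsetP => y; rewrite !inE => /andP[].
- by apply: subset_leq_card; apply/subsetP => y; rewrite !inE => /andP[].
- rewrite /cap; apply: ltB2; apply: (leq_trans _ (eq_leq (degD u))).
  apply: proper_card; apply/properP; split.
    by apply/subsetP => y; rewrite !inE => /andP[].
  have [w hwD hwu] : exists2 w, w \in D & u \in closedN e w.
    case: (domD u) => [hu|[w hw' euw]]; first by exists u; rewrite // inN eqxx.
    by exists w; rewrite // inN e_sym euw orbT.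
  exists (Lvtx e w (f w u)); first by rewrite !inE /gadj /= hwu eqxx.
  by rewrite !inE /gadj /= hwu eqxx /= hwD.
- by rewrite inE in hw.
Qed.

Lemma Cf_card : #|Cf| <= #|V| * (B + 2) + #|D|.
Proof.
rewrite card_owner -sum_mem -sum_nat_const -big_split /=.
apply: leq_sum => v _.
apply: (@leq_trans #|D' v |: (if v \in D then Lvtx e v @: setT else Svtx e v @: setT)|).
  apply: subset_leq_card; apply/subsetP => x; rewrite !inE.
  case: x => [[[w i]|[w j]]|[u|l]] /=; rewrite ?inE.
  - case/andP=> hw /eqP <-; rewrite (negbTE hw).
    by apply/imsetP; exists i.
  - case/andP=> hw /eqP <-; rewrite hw.
    by apply/imsetP; exists j.
  - by move=> /eqP ->; rewrite eqxx.
  - by [].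
rewrite cardsU1.
case: (v \in D) => /=.
- rewrite addnC; apply: leq_add; last by case: (_ \notin _).
  by rewrite card_imset ?cardsT ?card_ord // => j1 j2 [->].
- rewrite addn0 addnC; apply: (@leq_trans (B + 1 + 1)); last by rewrite -addnA.
  apply: leq_add; last by case: (_ \notin _).
  by rewrite card_imset ?cardsT ?card_ord // => j1 j2 [->].
Qed.

End Forward.


Lemma lt0B1 : 0 < B + 1. Proof. by rewrite addn1. Qed.
Definition o0 : 'I_(B+1) := Ordinal lt0B1.
Lemma lt0leaf v : (v, o0).2 < B - deg e (v, o0).1 + 1.
Proof. rewrite /=. by rewrite addn1. Qed.
Definition leaf0 v : leafT e B := exist _ (v, o0) (lt0leaf v).

Section Backward.
Variables (C : {set VT}) (a : VT -> VT -> VT).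
Hypothesis hC : cap_vc (gadj e f) (cap e f) C a.

Definition cnt v := #|[set x in C | owner x == v]|.

Lemma cover x y : gadj e f x y -> (x \in C) || (y \in C).
Proof.
move=> exy; case: hC => h _; case: (h x y exy) => _ /orP[] /eqP E hin.
- by move: hin; rewrite E => ->.
- by move: hin; rewrite E => ->; rewrite orbT.
Qed.

Lemma gadget v : (forall i, Svtx e v i \in C) \/ (forall j, Lvtx e v j \in C).
Proof.
case: (boolP [forall i, Svtx e v i \in C]) => [/forallP h|/forallPn [i hi]]; [by left|right].
move=> j; move: (@cover (Svtx e v i) (Lvtx e v j)); rewrite (negbTE hi) /=; apply.
by rewrite /gadj /= eqxx.
Qed.

Lemma zex v : exists2 z : V + leafT e B, (inr z : VT) \in C & owner (inr z) = v.
Proof.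
move: (@cover (Lf (leaf0 v)) (D' v)); rewrite /gadj /= eqxx /= => /(_ isT) /orP[] h.
- by exists (inr (leaf0 v)).
- by exists (inl v).
Qed.

Lemma cnt_ge v (X : {set VT}) : (forall x, x \in X -> x \in C /\ owner x = v) ->
  #|X| <= cnt v.
Proof.
move=> h; apply: subset_leq_card; apply/subsetP => x /h [h1 h2].
by rewrite !inE h1 h2 eqxx.
Qed.

Lemma cardS v : #|(@Svtx V e B v @: setT)| = B + 1.
Proof. by rewrite card_imset ?cardsT ?card_ord // => j1 j2 [->]. Qed.
Lemma cardL v : #|(@Lvtx V e B v @: setT)| = B + 2.
Proof. by rewrite card_imset ?cardsT ?card_ord // => j1 j2 [->]. Qed.

Lemma cnt_low v : B + 2 <= cnt v.
Proof.
have [z zC zo] := zex v.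
case: (gadget v) => h.
- apply: (@leq_trans #|inr z |: (@Svtx V e B v @: setT)|).
    rewrite cardsU1 cardS (_ : (inr z : VT) \notin _); first by rewrite add1n addn1 addn2.
    by apply/imsetP => -[].
  apply: cnt_ge => x; rewrite !inE => /orP[/eqP ->|/imsetP[i _ ->]] //.
- apply: (@leq_trans #|(@Lvtx V e B v @: setT)|); first by rewrite cardL.
  by apply: cnt_ge => x /imsetP[j _ ->].
Qed.

Lemma cnt_L v j : Lvtx e v j \in C -> B + 2 < cnt v.
Proof.
move=> hj; have [z zC zo] := zex v.
case: (gadget v) => h.
- apply: (@leq_trans #|inr z |: (Lvtx e v j |: (@Svtx V e B v @: setT))|).
    rewrite cardsU1 cardsU1 cardS (_ : (inr z : VT) \notin _).
      rewrite (_ : Lvtx e v j \notin _); first by rewrite !add1n addn1 addn2.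
      by apply/imsetP => -[].
    by rewrite !inE negb_or; apply/andP; split => //; apply/imsetP => -[].
  apply: cnt_ge => x; rewrite !inE => /orP[/eqP ->|/orP[/eqP ->|/imsetP[i _ ->]]] //.
- apply: (@leq_trans #|inr z |: (@Lvtx V e B v @: setT)|).
    rewrite cardsU1 cardL (_ : (inr z : VT) \notin _); first by rewrite add1n addn2.
    by apply/imsetP => -[].
  apply: cnt_ge => x; rewrite !inE => /orP[/eqP ->|/imsetP[i _ ->]] //.
Qed.

Lemma cnt_leaf v l : (val l).1 = v -> Lf l \in C -> D' v \in C ->
  (forall i, Svtx e v i \in C) -> B + 2 < cnt v.
Proof.
move=> hl hlC hD hS.
apply: (@leq_trans #|Lf l |: (D' v |: (@Svtx V e B v @: setT))|).
  rewrite cardsU1 cardsU1 cardS (_ : Lf l \notin _).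
    rewrite (_ : D' v \notin _); first by rewrite !add1n addn1 addn2.
    by apply/imsetP => -[].
  by rewrite !inE negb_or; apply/andP; split => //; apply/imsetP => -[].
apply: cnt_ge => x; rewrite !inE => /orP[/eqP ->|/orP[/eqP ->|/imsetP[i _ ->]]] //.
Qed.

Definition Dom := [set v | B + 2 < cnt v].

Lemma Dom_dom : dominating e Dom.
Proof.
move=> v; case: (boolP (B + 2 < cnt v)) => hv; [by left; rewrite inE | right].
have hL : forall j, Lvtx e v j \notin C.
  by move=> j; apply/negP => /cnt_L; rewrite (negbTE hv).
have hS : forall i, Svtx e v i \in C.
  case: (gadget v) => // h; by move: (hL (f v v)); rewrite h.
have hD : D' v \in C.
  move: (@cover (Lvtx e v (f v v)) (D' v)); rewrite (negbTE (hL _)) /=; apply.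
  by rewrite /gadj /= inN !eqxx.
have hleaf : forall l, (val l).1 = v -> Lf l \notin C.
  by move=> l hl; apply/negP => hlC; move: (cnt_leaf hl hlC hD hS); rewrite (negbTE hv).
case: hC => hC1 hC2.
have hcap := hC2 _ hD; rewrite /cap /= in hcap.
have [y hy hay] : exists2 y, gadj e f (D' v) y & a (D' v) y != D' v.
  case: (boolP [exists y, gadj e f (D' v) y && (a (D' v) y != D' v)]).
    by move=> /existsP [y /andP [h1 h2]]; exists y.
  move=> /existsPn hn; exfalso.
  have : #|[set y | gadj e f (D' v) y & a (D' v) y == D' v]| = deg (gadj e f) (D' v).
    apply: eq_card => y; rewrite !inE.
    by move: (hn y); case: (gadj e f (D' v) y) => //=; rewrite negbK.
  by rewrite degD => E; move: hcap; rewrite E addn2 addn1 ltnn.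
case: (hC1 _ _ hy) => _ /orP[/eqP E|/eqP E] hin; first by rewrite E eqxx in hay.
rewrite E in hin.
have : y \in ins (D' v).
  move: hy; rewrite /gadj /ins inE.
  by case: y {E hin hay} => [[[w i']|[w j']]|[u'|l']].
rewrite insD in_setU => /orP[/imsetP[w hw Ey]|/imsetP[l hl Ey]].
- exists w; first by rewrite inE; apply: (@cnt_L w (f w v)); rewrite -Ey.
  move: hw; rewrite inN eq_sym => /orP[/eqP Ew|] //.
  by subst w; move: (hL (f v v)); rewrite -Ey hin.
- by move: hl hin; rewrite inE Ey => /eqP /hleaf /negbTE ->.
Qed.

Lemma Dom_card : #|V| * (B + 2) + #|Dom| <= #|C|.
Proof.
rewrite card_owner -sum_mem -sum_nat_const -big_split /=.
apply: leq_sum => v _; rewrite inE.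
case: (boolP (B + 2 < cnt v)) => h /=; first by rewrite addn1.
by rewrite addn0 cnt_low.
Qed.

End Backward.

End Pf.

Theorem mainTheorem8 (V : finType) (e : rel V) (B k : nat)
    (f : V -> V -> 'I_(B+2))
    (e_sym : symmetric e) (e_irr : irreflexive e)
    (degB : forall v, deg e v <= B)
    (f_inj : forall v, {in closedN e v &, injective (f v)})
    (hk : k <= #|V|) :
  (forall w, deg (gadj e f) w <= B + 2) /\
  (0 < #|V| -> exists w, deg (gadj e f) w = B + 2) /\
  num_edges (gadj e f) = #|V| * (B + 2) ^ 2 /\
  ((exists D : {set V}, dominating e D /\ #|D| <= k) <->
   (exists (C : {set Vtx e B}) (a : Vtx e B -> Vtx e B -> Vtx e B),
      cap_vc (gadj e f) (cap e f) C a /\ #|C| <= #|V| * (B + 2) + k)).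
Proof.
split; first by move=> w; apply: deg_bound.
split.
  move=> /card_gt0P [v _].
  exists (Svtx e v (Ordinal (lt0B1 B))); exact: degS.
split; first exact: num_edgesE.
split.
- move=> [D [hD hk']].
  exists (Cf e B D), (asg D); split; first split.
  + by move=> x y /asg_ok; apply.
  + by move=> w hw; apply: (cap_ok f e_sym e_irr degB hD).
  + apply: leq_trans (Cf_card e B D) _; by rewrite leq_add2l.
- move=> [C [a [hC hs]]].
  exists (Dom C); split; first exact: (Dom_dom e_sym e_irr degB hC).
  have h := Dom_card hC.
  by rewrite -(leq_add2l (#|V| * (B + 2))); apply: leq_trans h hs.
Qed.
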